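(* There exist absolute positive constants $c,C$ such that the following holds. Let $n>10$ be an integer, $0<p<1/2$, and let $\varepsilon_1,\dots,\varepsilon_n$ be i.i.d. Bernoulli$(p)$ random variables, extended periodically by $\varepsilon_{j+n}=\varepsilon_j$. For integers $i$ let $X_i=\varepsilon_i\varepsilon_{i+1}$ (so $X_{i+n}=X_i$), and $W=\sum_{i=1}^nX_i$. Then for every positive integer $w\le cnp$ with $P(W=w)>0$, $$\sum_{i=1}^n\sum_{j\in\{i-1,i+1\}}E(X_iX_j\mid W=w)\le \frac{C}{np}\,w^2 .$$ *)

(* Defs.v *)
From HB Require Import structures.
From mathcomp Require Import all_boot all_order all_algebra.
Set Implicit Arguments. Unset Strict Implicit. Unset Printing Implicit Defensive.
Import Order.TTheory GRing.Theory Num.Theory.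
Local Open Scope ring_scope.

(* A configuration (eps_1,...,eps_n) in {0,1}^n, indexed cyclically by 'I_n
   (index i stands for i+1; successor ordS / predecessor ord_pred are mod n). *)
Definition config n := {ffun 'I_n -> bool}.

Definition Xi n (e : config n) (i : 'I_n) : nat := (e i && e (ordS i) : nat).

Definition Wsum n (e : config n) : nat := (\sum_(i < n) Xi e i)%N.

Definition weight (R : realFieldType) n (p : R) (e : config n) : R :=
  p ^+ #|[set i | e i]| * (1 - p) ^+ (n - #|[set i | e i]|).

Definition probW (R : realFieldType) n (p : R) (w : nat) : R :=
  \sum_(e : config n | Wsum e == w) weight p e.

Definition condE (R : realFieldType) n (p : R) (Y : config n -> R) (w : nat) : R :=
  (\sum_(e : config n | Wsum e == w) weight p e * Y e) / probW n p w.

(* Main.v *)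
Require Import Defs.
From HB Require Import structures.
From mathcomp Require Import all_boot all_order all_algebra.
From mathcomp Require Import zify ring lra.
Set Implicit Arguments. Unset Strict Implicit. Unset Printing Implicit Defensive.
Import Order.TTheory GRing.Theory Num.Theory.
Local Open Scope ring_scope.

Definition sh n (i : 'I_n) (k : nat) : 'I_n := iter k (@ordS n) i.

Lemma val_sh n (i : 'I_n) k : val (sh i k) = ((i + k) %% n)%N.
Proof.
elim: k => [|k IH]; first by rewrite addn0 modn_small.
by rewrite /sh iterS /= -/(sh i k) IH -addn1 modnDml addn1 addnS.
Qed.

Lemma sh_inj n (i : 'I_n) k1 k2 : (k1 < n)%N -> (k2 < n)%N -> sh i k1 = sh i k2 -> k1 = k2.
Proof.
move=> h1 h2 /(congr1 val); rewrite !val_sh => /eqP.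
by rewrite eqn_modDl !modn_small // => /eqP.
Qed.

Lemma sh_neq n (i : 'I_n) k1 k2 : (k1 < n)%N -> (k2 < n)%N -> k1 != k2 -> sh i k1 != sh i k2.
Proof. by move=> h1 h2 /eqP ne; apply/eqP => /(sh_inj h1 h2). Qed.

Lemma predE n (x : 'I_n) : ord_pred x = sh x n.-1.
Proof.
apply: val_inj; rewrite val_sh /=.
by case: n x => [[]|n'] x //; rewrite addnS.
Qed.

Lemma sh0 n (x : 'I_n) : sh x 0 = x. Proof. by []. Qed.
Lemma sh1 n (x : 'I_n) : sh x 1 = ordS x. Proof. by []. Qed.
Lemma shS n (x : 'I_n) k : sh x k.+1 = ordS (sh x k). Proof. by []. Qed.

Definition upd n (e : config n) (x : 'I_n) (b : bool) : config n :=
  [ffun y => if y == x then b else e y].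
Lemma updE n (e : config n) x b y : upd e x b y = if y == x then b else e y.
Proof. by rewrite ffunE. Qed.
Lemma upd_inj n (e1 e2 : config n) x b : upd e1 x b = upd e2 x b -> e1 x = e2 x -> e1 = e2.
Proof.
move=> h hx; apply/ffunP => y; case: (eqVneq y x) => [->//|nyx].
by have := congr1 (fun f : config n => f y) h; rewrite !updE (negbTE nyx).
Qed.

Lemma Px_neq n (x : 'I_n) : (1 < n)%N -> ord_pred x != x.
Proof.
move=> hn; rewrite predE -{2}(sh0 x); apply: sh_neq; lia.
Qed.

Lemma W_upd n (e : config n) x b : (1 < n)%N ->
  (Wsum (upd e x b) + (e (ord_pred x) && e x) + (e x && e (ordS x)) =
   Wsum e + (e (ord_pred x) && b) + (b && e (ordS x)))%N.
Proof.
move=> hn; have hP := Px_neq x hn.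
have hS : ordS x != x.
  by apply/eqP => h; move: hP; rewrite -{1}h ordSK eqxx.
rewrite /Wsum (bigD1 x) //= (bigD1 (ord_pred x)) ?hP //=.
rewrite [in RHS](bigD1 x) //= [in RHS](bigD1 (ord_pred x)) ?hP //=.
have -> : (\sum_(i < n | (i != x) && (i != ord_pred x)) Xi (upd e x b) i =
          \sum_(i < n | (i != x) && (i != ord_pred x)) Xi e i)%N.
  apply: eq_bigr => i /andP[h1 h2]; rewrite /Xi !updE (negbTE h1).
  case: eqP => // h3; move: h2; by rewrite -h3 ordSK eqxx.
rewrite /Xi !updE eqxx (negbTE hS) (negbTE hP) ord_predK eqxx.
move: (\sum_(i < n | _) _)%N => s.
move: (b && e (ordS x) : nat) (e (ord_pred x) && b : nat) (e (ord_pred x) && e x : nat) (e x && e (ordS x) : nat) => a1 a2 a3 a4.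
lia.
Qed.

Definition cnt n (e : config n) := #|[set i | e i]|.

Lemma cntE n (e : config n) : cnt e = (\sum_(i < n) (e i : nat))%N.
Proof.
rewrite /cnt -sum1_card big_mkcond /=; apply: eq_bigr => i _; rewrite inE.
by case: (e i).
Qed.

Lemma cnt_le n (e : config n) : (cnt e <= n)%N.
Proof. by rewrite /cnt; apply: leq_trans (max_card _) _; rewrite card_ord. Qed.

Lemma cnt_upd n (e : config n) x b : (cnt (upd e x b) + e x = cnt e + b)%N.
Proof.
rewrite !cntE (bigD1 x) //= [in RHS](bigD1 x) //= updE eqxx.
have -> : (\sum_(i < n | i != x) upd e x b i = \sum_(i < n | i != x) e i)%N.
  by apply: eq_bigr => i hi; rewrite updE (negbTE hi).
move: (\sum_(i < n | _) _)%N => s; move: (e x : nat) (b : nat) => a1 a2; lia.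
Qed.

Lemma weight_step (R : realFieldType) n (p : R) (e e' : config n) :
  cnt e' = (cnt e).+1 -> weight p e' * (1 - p) = weight p e * p.
Proof.
move=> h; have hle := cnt_le e'.
rewrite /weight -!/(cnt _) h.
have -> : (n - cnt e = (n - (cnt e).+1).+1)%N by rewrite h in hle; lia.
rewrite !exprS; ring.
Qed.

Lemma sum_inj_le (R : realFieldType) (X Y : finType) (P : pred X) (Q : pred Y)
  (phi : X -> Y) (F : Y -> R) :
  (forall x1 x2, P x1 -> P x2 -> phi x1 = phi x2 -> x1 = x2) ->
  (forall x, P x -> Q (phi x)) -> (forall y, 0 <= F y) ->
  \sum_(x | P x) F (phi x) <= \sum_(y | Q y) F y.
Proof.
move=> inj hQ hF.
have inj' : {in [pred x | P x] &, injective phi} by move=> x1 x2 h1 h2; apply: inj.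
rewrite -(big_imset _ inj') /= (bigID (fun y => y \in phi @: [pred x | P x]) Q) /=.
rewrite -[X in X <= _]addr0; apply: lerD; last by apply: sumr_ge0.
rewrite le_eqVlt; apply/orP; left; apply/eqP; apply: eq_bigl => y.
case hy: (y \in _); rewrite ?andbF ?andbT //.
by case/imsetP: hy => x hx ->; rewrite hQ.
Qed.

Definition Good n (e : config n) (i d : 'I_n) : bool :=
  [&& (2 <= d)%N, [forall k : 'I_n, (k <= d)%N ==> e (sh i k)] & ~~ e (sh i d.+1)].

Lemma good_ex n (e : config n) (i z : 'I_n) : ~~ e z ->
  e i -> e (ordS i) -> e (ordS (ordS i)) -> exists d, Good e i d.
Proof.
move=> hz h0 h1 h2.
have hn : (0 < n)%N by case: n i {e z hz h0 h1 h2} => [[]|].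
pose kz := ((z + n - i) %% n)%N.
have hkz : sh i kz = z.
  apply: val_inj; rewrite val_sh /kz modnDmr.
  have -> : (i + (z + n - i) = z + n)%N by have := ltn_ord i; lia.
  by rewrite modnDr modn_small.
have hex : exists k, ~~ e (sh i k) by exists kz; rewrite hkz.
case: (ex_minnP hex) => k0 hk0 hmin.
have hk0n : (k0 < n)%N.
  have h3 : (k0 <= kz)%N by apply: hmin; rewrite hkz.
  by apply: leq_ltn_trans h3 _; rewrite /kz ltn_pmod.
have hk03 : (2 < k0)%N.
  by case: k0 hk0 hmin hk0n => [|[|[|k0]]] //=; rewrite ?h0 ?h1 ?h2.
have hd : (k0.-1 < n)%N by lia.
exists (Ordinal hd); rewrite /Good /=; apply/and3P; split.
- by apply: leq_trans (_ : 2 <= k0.-1)%N _; lia.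
- apply/forallP => k; apply/implyP => hk.
  apply/negPn/negP => hc; have := hmin _ hc; lia.
- have hk : k0 = k0.-1.+1 by lia.
  by rewrite -shS -hk.
Qed.

Lemma Wsum_all n (e : config n) : (forall z, e z) -> Wsum e = n.
Proof.
move=> h; rewrite /Wsum (eq_bigr (fun _ => 1%N)) ?sum1_card ?card_ord //.
by move=> i _; rewrite /Xi !h.
Qed.

Lemma zero_ex n (e : config n) : (Wsum e < n)%N -> exists z, ~~ e z.
Proof.
move=> h; case: (pickP (fun z => ~~ e z)) => [z hz|hf]; first by exists z.
suff : Wsum e = n by lia.
by apply: Wsum_all => z; have := hf z => /negbFE.
Qed.

Lemma weight_ge0 (R : realFieldType) n (p : R) (e : config n) :
  0 <= p -> p <= 1 -> 0 <= weight p e.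
Proof. by move=> h0 h1; rewrite /weight mulr_ge0 // exprn_ge0 // subr_ge0. Qed.

Lemma good_true n (e : config n) i d (k : nat) : Good e i d -> (k <= d)%N -> e (sh i k).
Proof.
case/and3P => _ /forallP hf _ hk.
have hkn : (k < n)%N by apply: leq_ltn_trans hk (ltn_ord d).
by have := hf (Ordinal hkn); rewrite /= hk.
Qed.

Lemma inj_aux n (e1 e2 : config n) i (d1 d2 : 'I_n) :
  Good e1 i d1 -> Good e2 i d2 ->
  upd e1 (sh i d1) false = upd e2 (sh i d2) false -> (d1 < d2)%N -> False.
Proof.
move=> g1 g2 h hlt.
have h2 : e2 (sh i d1) by apply: (good_true g2); apply: ltnW.
have hne : sh i d1 != sh i d2 by apply: sh_neq => //; lia.
have := congr1 (fun f : config n => f (sh i d1)) h.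
by rewrite !updE eqxx (negbTE hne) h2.
Qed.

Lemma stage1_i (R : realFieldType) n (p : R) w (i : 'I_n) : (10 < n)%N -> 0 <= p -> p <= 1 ->
  (1 - p) * \sum_(x : config n * 'I_n | (Wsum x.1 == w) && Good x.1 i x.2) weight p x.1
   <= p * \sum_(e : config n | (Wsum e == w.-1) && (e i && e (ordS i))) weight p e.
Proof.
move=> hn hp hp1.
pose phi (x : config n * 'I_n) := upd x.1 (sh i x.2) false.
have key : forall x, (Wsum x.1 == w) && Good x.1 i x.2 ->
   cnt x.1 = (cnt (phi x)).+1 /\ ((Wsum (phi x) == w.-1) && (phi x i && phi x (ordS i))).
  case=> e d /=; case/andP => /eqP hW hg.
  have hg' := hg; case/and3P: hg' => hd2 _ hnx.
  have hn1 : (1 < n)%N by lia.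
  have hdn := ltn_ord d.
  have het : e (sh i d) by apply: (good_true hg).
  have ht0 : i != sh i d by rewrite -{1}(sh0 i); apply: sh_neq => //; lia.
  have ht1 : ordS i != sh i d by rewrite -sh1; apply: sh_neq => //; lia.
  rewrite /phi /=; split.
    by have := cnt_upd e (sh i d) false; rewrite het; lia.
  have hP : ord_pred (sh i d) = sh i d.-1.
    have -> : sh i d = ordS (sh i d.-1) by rewrite -shS; congr sh; lia.
    by rewrite ordSK.
  have hPt : e (sh i d.-1) by apply: (good_true hg); lia.
  have := W_upd e (sh i d) false hn1; rewrite hP hPt het /= (negbTE hnx) hW.
  move=> hw; apply/andP; split; first by apply/eqP; lia.
  rewrite !updE (negbTE ht0) (negbTE ht1).
  by rewrite -(sh0 i) (good_true hg) //= -sh1 (good_true hg) //; lia.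
rewrite mulr_sumr (eq_bigr (fun x => p * weight p (phi x))); last first.
  move=> x hx; case: (key x hx) => hc _.
  by rewrite mulrC (weight_step p hc) mulrC.
rewrite -mulr_sumr; apply: ler_wpM2l => //.
apply: (sum_inj_le (P := fun x => (Wsum x.1 == w) && Good x.1 i x.2)
  (Q := fun e => (Wsum e == w.-1) && (e i && e (ordS i)))).
- case=> e1 d1 [e2 d2] /= /andP[_ g1] /andP[_ g2]; rewrite /phi /= => h.
  case: (ltngtP d1 d2) => hd.
  + by case: (inj_aux g1 g2 h hd).
  + by case: (inj_aux g2 g1 (esym h) hd).
  + have hdd : d1 = d2 by apply: val_inj.
    subst d2; congr pair; apply: (upd_inj h).
    by rewrite (good_true g1) ?(good_true g2).
- by move=> x hx; case: (key x hx).
- by move=> e; apply: weight_ge0.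
Qed.

Definition Aof n (e : config n) : nat :=
  (\sum_(i < n) (e i && e (ordS i) && e (ordS (ordS i)) : nat))%N.

Lemma sumW (R : realFieldType) n (p : R) v :
  \sum_(i < n) \sum_(e : config n | (Wsum e == v) && (e i && e (ordS i))) weight p e
  = v%:R * probW n p v.
Proof.
rewrite (eq_bigr (fun i => \sum_(e : config n | Wsum e == v)
   (if e i && e (ordS i) then weight p e else 0))); last by move=> i _; rewrite big_mkcondr.
rewrite exchange_big /probW mulr_sumr; apply: eq_bigr => e /eqP he.
rewrite -he /Wsum natr_sum mulr_suml; apply: eq_bigr => i _.
by rewrite /Xi; case: (e i && e (ordS i)); rewrite ?mul1r ?mul0r.
Qed.

Lemma stage1 (R : realFieldType) n (p : R) w : (10 < n)%N -> 0 <= p -> p <= 1 -> (w < n)%N ->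
  (1 - p) * \sum_(e : config n | Wsum e == w) weight p e * (Aof e)%:R
  <= p * ((w.-1)%:R * probW n p w.-1).
Proof.
move=> hn hp hp1 hwn.
have step : \sum_(e : config n | Wsum e == w) weight p e * (Aof e)%:R <=
   \sum_(i < n) \sum_(x : config n * 'I_n | (Wsum x.1 == w) && Good x.1 i x.2) weight p x.1.
  rewrite (eq_bigr (fun i => \sum_(e : config n | Wsum e == w) \sum_(d | Good e i d) weight p e));
    last by move=> i _; rewrite pair_big_dep.
  rewrite exchange_big /=; apply: ler_sum => e /eqP hW.
  rewrite /Aof natr_sum mulr_sumr; apply: ler_sum => i _.
  have [z hz] : exists z, ~~ e z by apply: zero_ex; rewrite hW.
  case hT: (e i && e (ordS i) && e (ordS (ordS i))).
    case/andP: hT => /andP[h0 h1] h2.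
    case: (good_ex hz h0 h1 h2) => d hd.
    rewrite (bigD1 d) //= mulr1 -[X in X <= _]addr0 lerD //.
    by apply: sumr_ge0 => ? _; apply: weight_ge0.
  by rewrite mulr0; apply: sumr_ge0 => ? _; apply: weight_ge0.
have hp' : 0 <= 1 - p by rewrite subr_ge0.
apply: le_trans (ler_wpM2l hp' step) _.
rewrite mulr_sumr -sumW mulr_sumr; apply: ler_sum => i _.
exact: stage1_i.
Qed.

Section Dist.
Lemma S_neq n (z : 'I_n) : (2 < n)%N -> ordS z != z.
Proof. by move=> h; rewrite -sh1 -{2}(sh0 z); apply: sh_neq; lia. Qed.
Lemma SS_neq n (z : 'I_n) : (2 < n)%N -> ordS (ordS z) != z.
Proof. by move=> h; rewrite (_ : ordS (ordS z) = sh z 2) // -{2}(sh0 z); apply: sh_neq; lia. Qed.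
Lemma P_neq n (z : 'I_n) : (2 < n)%N -> ord_pred z != z.
Proof. by move=> h; rewrite predE -{2}(sh0 z); apply: sh_neq; lia. Qed.
Lemma PS_neq n (z : 'I_n) : (2 < n)%N -> ord_pred z != ordS z.
Proof. by move=> h; rewrite predE -sh1; apply: sh_neq; lia. Qed.
End Dist.

Definition Asp n (e : config n) z := [&& ~~ e (ord_pred z), ~~ e z & e (ordS z)].
Definition Csp n (e : config n) z :=
  [&& ~~ e (ord_pred z), ~~ e z, ~~ e (ordS z) & ~~ e (ordS (ordS z))].
Definition Esp n (e : config n) z :=
  [&& e (ord_pred z), ~~ e z, e (ordS z) & ~~ e (ordS (ordS z))].

Lemma sum_eq3 n (f g h : 'I_n -> nat) : (forall z, f z = g z + h z)%N ->
  (\sum_(z < n) f z = \sum_(z < n) g z + \sum_(z < n) h z)%N.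
Proof. by move=> H; rewrite -big_split; apply: eq_bigr. Qed.

Lemma sum_le3 n (f g h : 'I_n -> nat) : (forall z, f z <= g z + h z)%N ->
  (\sum_(z < n) f z <= \sum_(z < n) g z + \sum_(z < n) h z)%N.
Proof. by move=> H; rewrite -big_split; apply: leq_sum. Qed.

Lemma sum_shift n (f : 'I_n -> nat) : (\sum_(z < n) f z = \sum_(z < n) f (ordS z))%N.
Proof. by rewrite (reindex_inj (@ordS_inj n)). Qed.

Lemma capacity n (e : config n) : (2 < n)%N -> (10 * Wsum e <= n)%N ->
  (n <= 12 * (\sum_(z < n) (Asp e z : nat) + \sum_(z < n) (Csp e z : nat)
              + \sum_(z < n) (Esp e z : nat)))%N.
Proof.
move=> hn hW.
set a := (\sum_(z < n) (Asp e z : nat))%N.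
set c := (\sum_(z < n) (Csp e z : nat))%N.
set ep := (\sum_(z < n) (Esp e z : nat))%N.
set ones := (\sum_(z < n) (e z : nat))%N.
set Z := (\sum_(z < n) (~~ e z : nat))%N.
set ends := (\sum_(z < n) (e z && ~~ e (ordS z) : nat))%N.
set starts := (\sum_(z < n) (~~ e z && e (ordS z) : nat))%N.
have h1 : (ones + Z = n)%N.
  rewrite /ones /Z -big_split /= (eq_bigr (fun _ => 1%N)) ?sum1_card ?card_ord //.
  by move=> z _; case: (e z).
have h2 : (ones = Wsum e + ends)%N.
  by apply: sum_eq3 => z; rewrite /Xi; case: (e z); case: (e (ordS z)).
have h3 : (Wsum e + starts = ones)%N.
  rewrite /ones (sum_shift (fun z => e z : nat)) /Wsum; apply/esym.
  by apply: sum_eq3 => z; rewrite /Xi; case: (e z); case: (e (ordS z)).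
have hWs : (Wsum e = \sum_(z < n) Xi e (ordS z))%N by rewrite /Wsum (sum_shift (Xi e)).
have haS : (a = \sum_(z < n) (Asp e (ordS z) : nat))%N by rewrite /a (sum_shift (fun z => Asp e z : nat)).
have hends : (ends = \sum_(z < n) (e (ord_pred z) && ~~ e z : nat))%N.
  rewrite /ends (sum_shift (fun z => e (ord_pred z) && ~~ e z : nat)).
  by apply: eq_bigr => z _; rewrite ordSK.
have h4 : (starts <= a + ep + Wsum e)%N.
  rewrite hWs /starts.
  have H : forall z, (~~ e z && e (ordS z) <= Asp e z + Esp e z + Xi e (ordS z))%N.
    move=> z; rewrite /Asp /Esp /Xi.
    by case: (e (ord_pred z)); case: (e z); case: (e (ordS z)); case: (e (ordS (ordS z))).
  by rewrite /a /ep -!big_split; apply: leq_sum => z _; apply: H.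
have h5 : (Z <= a + ep + Wsum e + c + a + ends)%N.
  rewrite {2}haS hWs hends /Z.
  have H : forall z, (~~ e z <= Asp e z + Esp e z + Xi e (ordS z) + Csp e z
                     + Asp e (ordS z) + (e (ord_pred z) && ~~ e z))%N.
    move=> z; rewrite /Asp /Esp /Xi /Csp ordSK.
    by case: (e (ord_pred z)); case: (e z); case: (e (ordS z)); case: (e (ordS (ordS z))).
  by rewrite /a /ep /c -!big_split; apply: leq_sum => z _; apply: H.
lia.
Qed.

Lemma sumY (R : realFieldType) n (p : R) w :
  \sum_(y : config n * 'I_n | (Wsum y.1 == w) && (y.1 y.2 && y.1 (ordS y.2))) weight p y.1
  = w%:R * probW n p w.
Proof.
rewrite -(pair_big_dep (fun e : config n => Wsum e == w)
  (fun (e : config n) (j : 'I_n) => e j && e (ordS j)) (fun (e : config n) _ => weight p e)) /=.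
rewrite -sumW.
rewrite (eq_bigr (fun e : config n => \sum_(j < n) (if e j && e (ordS j) then weight p e else 0)));
  last by move=> e _; rewrite big_mkcond.
rewrite exchange_big /=; apply: eq_bigr => j _.
by rewrite big_mkcondr.
Qed.

Lemma opA (R : realFieldType) n (p : R) v : (2 < n)%N -> 0 <= p -> p <= 1 ->
  \sum_(x : config n * 'I_n | (Wsum x.1 == v) && Asp x.1 x.2) p * weight p x.1
  <= \sum_(y : config n * 'I_n | (Wsum y.1 == v.+1) && (y.1 y.2 && y.1 (ordS y.2))) weight p y.1.
Proof.
move=> hn hp hp1.
pose phi (x : config n * 'I_n) := (upd x.1 x.2 true, x.2).
have hn1 : (1 < n)%N by lia.
have key : forall x, (Wsum x.1 == v) && Asp x.1 x.2 ->
  cnt (phi x).1 = (cnt x.1).+1 /\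
  ((Wsum (phi x).1 == v.+1) && ((phi x).1 (phi x).2 && (phi x).1 (ordS (phi x).2))).
  case=> e z /= /andP[/eqP hW /and3P[hP hz hS]]; split.
    by have := cnt_upd e z true; rewrite (negbTE hz); lia.
  have := W_upd e z true hn1; rewrite (negbTE hP) (negbTE hz) hS hW /= => hw.
  apply/andP; split; first by apply/eqP; lia.
  by rewrite !updE eqxx (negbTE (S_neq z hn)) hS.
apply: (@le_trans _ _ (\sum_(x : config n * 'I_n | (Wsum x.1 == v) && Asp x.1 x.2)
   weight p (phi x).1)).
  apply: ler_sum => x hx; case: (key x hx) => hc _.
  have := weight_step p hc => h.
  rewrite mulrC -h -[X in _ <= X]mulr1 ler_wpM2l ?weight_ge0 //.
  by rewrite lerBlDr lerDl.
apply: (sum_inj_le (P := fun x => (Wsum x.1 == v) && Asp x.1 x.2)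
  (Q := fun y => (Wsum y.1 == v.+1) && (y.1 y.2 && y.1 (ordS y.2)))
  (F := fun y => weight p y.1)).
- case=> e1 z1 [e2 z2] /= /andP[_ /and3P[_ h1 _]] /andP[_ /and3P[_ h2 _]].
  rewrite /phi /= => [[h hz]]; subst z2; congr pair.
  by apply: (upd_inj h); rewrite (negbTE h1) (negbTE h2).
- by move=> x hx; case: (key x hx).
- by move=> y; apply: weight_ge0.
Qed.

Lemma opC (R : realFieldType) n (p : R) v : (2 < n)%N -> 0 <= p -> p <= 1 ->
  \sum_(x : config n * 'I_n | (Wsum x.1 == v) && Csp x.1 x.2) p ^+ 2 * weight p x.1
  <= \sum_(y : config n * 'I_n | (Wsum y.1 == v.+1) && (y.1 y.2 && y.1 (ordS y.2))) weight p y.1.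
Proof.
move=> hn hp hp1.
pose phi (x : config n * 'I_n) := (upd (upd x.1 x.2 true) (ordS x.2) true, x.2).
have hn1 : (1 < n)%N by lia.
have key : forall x, (Wsum x.1 == v) && Csp x.1 x.2 ->
  [/\ cnt (upd x.1 x.2 true) = (cnt x.1).+1, cnt (phi x).1 = (cnt (upd x.1 x.2 true)).+1 &
  ((Wsum (phi x).1 == v.+1) && ((phi x).1 (phi x).2 && (phi x).1 (ordS (phi x).2)))].
  case=> e z /= /andP[/eqP hW /and4P[hP hz hS hSS]]; split.
  - by have := cnt_upd e z true; rewrite (negbTE hz); lia.
  - by have := cnt_upd (upd e z true) (ordS z) true; rewrite updE (negbTE (S_neq z hn)) (negbTE hS); lia.
  have := W_upd e z true hn1; rewrite (negbTE hP) (negbTE hz) (negbTE hS) hW /= => hw1.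
  have := W_upd (upd e z true) (ordS z) true hn1.
  rewrite ordSK !updE eqxx (negbTE (S_neq z hn)) (negbTE (SS_neq z hn)) (negbTE hS) (negbTE hSS) /=.
  move=> hw2; apply/andP; split; first by apply/eqP; lia.
  have hzS : z != ordS z by rewrite eq_sym S_neq.
  by rewrite eqxx; case: (_ == _).
apply: (@le_trans _ _ (\sum_(x : config n * 'I_n | (Wsum x.1 == v) && Csp x.1 x.2)
   weight p (phi x).1)).
  apply: ler_sum => x hx; case: (key x hx) => hc1 hc2 _.
  have h1 := weight_step p hc1; have h2 := weight_step p hc2.
  have E : p ^+ 2 * weight p x.1 = (1 - p) ^+ 2 * weight p (phi x).1.
    rewrite !expr2; transitivity (p * (weight p x.1 * p)); first by ring.
    rewrite -h1; transitivity ((1 - p) * (weight p (upd x.1 x.2 true) * p)); first by ring.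
    by rewrite -h2; ring.
  rewrite E ler_piMl ?weight_ge0 // exprn_ile1 // ?subr_ge0 //.
  by rewrite lerBlDr lerDl.
apply: (sum_inj_le (P := fun x => (Wsum x.1 == v) && Csp x.1 x.2)
  (Q := fun y => (Wsum y.1 == v.+1) && (y.1 y.2 && y.1 (ordS y.2)))
  (F := fun y => weight p y.1)).
- case=> e1 z1 [e2 z2] /= /andP[_ /and4P[_ h1 h1S _]] /andP[_ /and4P[_ h2 h2S _]].
  rewrite /phi /= => [[h hz]]; subst z2; congr pair.
  have h' := upd_inj h; rewrite !updE (negbTE (S_neq z1 hn)) (negbTE h1S) (negbTE h2S) in h'.
  by apply: (upd_inj (h' erefl)); rewrite (negbTE h1) (negbTE h2).
- by move=> x hx; case: (key x hx).
- by move=> y; apply: weight_ge0.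
Qed.

Lemma opE (R : realFieldType) n (p : R) v : (2 < n)%N -> 0 < p -> p <= 1 ->
  \sum_(x : config n * 'I_n | (Wsum x.1 == v) && Esp x.1 x.2) weight p x.1
  <= \sum_(y : config n * 'I_n | (Wsum y.1 == v.+1) && (y.1 y.2 && y.1 (ordS y.2))) weight p y.1.
Proof.
move=> hn hp hp1.
pose phi (x : config n * 'I_n) := (upd (upd x.1 x.2 true) (ordS x.2) false, ord_pred x.2).
have hn1 : (1 < n)%N by lia.
have hzS : forall z : 'I_n, z != ordS z by move=> z; rewrite eq_sym S_neq.
have key : forall x, (Wsum x.1 == v) && Esp x.1 x.2 ->
  [/\ cnt (upd x.1 x.2 true) = (cnt x.1).+1, cnt (upd x.1 x.2 true) = (cnt (phi x).1).+1 &
  ((Wsum (phi x).1 == v.+1) && ((phi x).1 (phi x).2 && (phi x).1 (ordS (phi x).2)))].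
  case=> e z /= /andP[/eqP hW /and4P[hP hz hS hSS]]; split.
  - by have := cnt_upd e z true; rewrite (negbTE hz); lia.
  - by have := cnt_upd (upd e z true) (ordS z) false; rewrite updE (negbTE (S_neq z hn)) hS; lia.
  have := W_upd e z true hn1; rewrite hP (negbTE hz) hS hW /= => hw1.
  have := W_upd (upd e z true) (ordS z) false hn1.
  rewrite ordSK !updE eqxx (negbTE (S_neq z hn)) (negbTE (SS_neq z hn)) hS (negbTE hSS) /=.
  move=> hw2; apply/andP; split; first by apply/eqP; lia.
  rewrite ord_predK (negbTE (PS_neq z hn)) (negbTE (P_neq z hn)) hP /=.
  by rewrite (negbTE (hzS z)) eqxx.
apply: (@le_trans _ _ (\sum_(x : config n * 'I_n | (Wsum x.1 == v) && Esp x.1 x.2)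
   weight p (phi x).1)).
  apply: ler_sum => x hx; case: (key x hx) => hc1 hc2 _.
  have h1 := weight_step p hc1; have h2 := weight_step p hc2.
  have : weight p x.1 * p = weight p (phi x).1 * p by rewrite -h1 -h2.
  move/(mulIf (lt0r_neq0 hp)) => ->; exact: lexx.
apply: (sum_inj_le (P := fun x => (Wsum x.1 == v) && Esp x.1 x.2)
  (Q := fun y => (Wsum y.1 == v.+1) && (y.1 y.2 && y.1 (ordS y.2)))
  (F := fun y => weight p y.1)).
- case=> e1 z1 [e2 z2] /= /andP[_ /and4P[_ h1 h1S _]] /andP[_ /and4P[_ h2 h2S _]].
  rewrite /phi /= => [[h hz]]; have hz' : z1 = z2 by apply: ord_pred_inj; apply: val_inj; exact: hz.
  subst z2; congr pair.
  have h' := upd_inj h; rewrite !updE (negbTE (S_neq z1 hn)) h1S h2S in h'.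
  by apply: (upd_inj (h' erefl)); rewrite (negbTE h1) (negbTE h2).
- by move=> x hx; case: (key x hx).
- by move=> y; apply: weight_ge0 => //; apply: ltW.
Qed.

Lemma sum_cond_nat (R : realFieldType) n (f : 'I_n -> bool) (c : R) :
  \sum_(z < n | f z) c = c * (\sum_(z < n) (f z : nat))%:R.
Proof.
rewrite big_mkcond natr_sum mulr_sumr; apply: eq_bigr => z _.
by case: (f z); rewrite ?mulr1 ?mulr0.
Qed.

Lemma pair_conv (R : realFieldType) n v (f : config n -> 'I_n -> bool) (G : config n -> R) :
  \sum_(x : config n * 'I_n | (Wsum x.1 == v) && f x.1 x.2) G x.1
  = \sum_(e : config n | Wsum e == v) G e * (\sum_(z < n) (f e z : nat))%:R.
Proof.
rewrite -(pair_big_dep (fun e : config n => Wsum e == v) f (fun (e : config n) _ => G e)) /=.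
by apply: eq_bigr => e _; rewrite sum_cond_nat.
Qed.

Lemma stage2 (R : realFieldType) n (p : R) w : (10 < n)%N -> 0 < p -> p <= 1 ->
  (0 < w)%N -> (10 * w <= n)%N ->
  p ^+ 2 * n%:R * probW n p w.-1 <= 36 * (w%:R * probW n p w).
Proof.
move=> hn hp hp1 hw hwn.
have hp0 : 0 <= p by apply: ltW.
have h3 : (2 < n)%N by lia.
have hvw : w = w.-1.+1 by lia.
have HA := opA w.-1 h3 hp0 hp1; have HC := opC w.-1 h3 hp0 hp1; have HE := opE w.-1 h3 hp hp1.
rewrite -hvw sumY in HA HC HE.
rewrite (pair_conv w.-1 (@Asp n) (fun e => p * weight p e)) in HA.
rewrite (pair_conv w.-1 (@Csp n) (fun e => p ^+ 2 * weight p e)) in HC.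
rewrite (pair_conv w.-1 (@Esp n) (fun e => weight p e)) in HE.
have Hsum : p ^+ 2 * n%:R * probW n p w.-1 <=
   12 * (\sum_(e : config n | Wsum e == w.-1) (p * weight p e) * (\sum_(z < n) (Asp e z : nat))%:R
       + \sum_(e : config n | Wsum e == w.-1) (p ^+ 2 * weight p e) * (\sum_(z < n) (Csp e z : nat))%:R
       + \sum_(e : config n | Wsum e == w.-1) weight p e * (\sum_(z < n) (Esp e z : nat))%:R).
  rewrite /probW mulr_sumr -!big_split mulr_sumr /=; apply: ler_sum => e /eqP hW.
  have hcap := capacity h3 (_ : 10 * Wsum e <= n)%N.
  rewrite hW in hcap; have {}hcap := hcap (leq_trans (leq_mul (leqnn 10) (leq_pred w)) hwn).
  move: (\sum_(z < n) (Asp e z : nat))%N (\sum_(z < n) (Csp e z : nat))%N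
        (\sum_(z < n) (Esp e z : nat))%N hcap => a c ep hcap.
  have hn' : (n%:R : R) <= 12 * (a%:R + c%:R + ep%:R).
    by rewrite -!natrD -(natrM R 12) ler_nat.
  have hwt := weight_ge0 e hp0 hp1.
  have hpp : p ^+ 2 <= p by rewrite expr2 ler_piMl.
  have hp2 : 0 <= p ^+ 2 by rewrite exprn_ge0.
  have ha : 0 <= (a%:R : R) by []. 
  have hc : 0 <= (c%:R : R) by [].
  have he : 0 <= (ep%:R : R) by [].
  move: (weight p e) hwt => W hWt.
  apply: (@le_trans _ _ (p ^+ 2 * W * (12 * (a%:R + c%:R + ep%:R)))).
    by rewrite [X in X <= _]mulrAC; apply: ler_wpM2l; [apply: mulr_ge0|].
  rewrite -subr_ge0.
  have -> : 12 * (p * W * a%:R + p ^+ 2 * W * c%:R + W * ep%:R) -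
      p ^+ 2 * W * (12 * (a%:R + c%:R + ep%:R)) =
      12 * (W * ((p - p ^+ 2) * a%:R + (1 - p ^+ 2) * ep%:R)) by ring.
  apply: mulr_ge0 => //; apply: mulr_ge0 => //; apply: addr_ge0; apply: mulr_ge0 => //.
    by rewrite subr_ge0.
  by rewrite subr_ge0 exprn_ile1.
apply: le_trans Hsum _.
apply: le_trans (ler_wpM2l _ (lerD (lerD HA HC) HE)) _ => //.
move: (w%:R * probW n p w) => X.
by rewrite le_eqVlt; apply/orP; left; apply/eqP; ring.
Qed.

Lemma Aof_S n (e : config n) : (\sum_(i < n) Xi e i * Xi e (ordS i))%N = Aof e.
Proof. by rewrite /Aof; apply: eq_big => // i _; rewrite /Xi; case: (e i); case: (e (ordS i)); case: (e (ordS (ordS i))). Qed.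

Lemma Aof_P n (e : config n) : (\sum_(i < n) Xi e i * Xi e (ord_pred i))%N = Aof e.
Proof.
rewrite (sum_shift (fun i => Xi e i * Xi e (ord_pred i))%N) -(Aof_S e).
by apply: eq_bigr => i _; rewrite ordSK mulnC.
Qed.

Lemma lhs_eq (R : realFieldType) n (p : R) w :
  \sum_(i < n)
       (condE p (fun e => (Xi e i * Xi e (ord_pred i))%:R) w
      + condE p (fun e => (Xi e i * Xi e (ordS i))%:R) w)
  = 2 * (\sum_(e : config n | Wsum e == w) weight p e * (Aof e)%:R) / probW n p w.
Proof.
rewrite /condE big_split /= -!mulr_suml -mulrDl; congr (_ / _).
rewrite [X in X + _]exchange_big [X in _ + X]exchange_big /= -big_split /= mulr_sumr.
apply: eq_bigr => e _.
rewrite -!mulr_sumr -mulrDr -!natr_sum Aof_S Aof_P.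
by rewrite mulrCA -natrD addnn -mul2n natrM.
Qed.

Theorem mainTheorem6 :
  exists c C : rat, 0 < c /\ 0 < C /\
  forall (R : realFieldType) (n : nat) (p : R) (w : nat),
    (10 < n)%N -> 0 < p -> p < 1 / 2 ->
    (0 < w)%N -> w%:R <= ratr c * n%:R * p ->
    0 < probW n p w ->
    \sum_(i < n)
       (condE p (fun e => (Xi e i * Xi e (ord_pred i))%:R) w
      + condE p (fun e => (Xi e i * Xi e (ordS i))%:R) w)
    <= ratr C / (n%:R * p) * w%:R ^+ 2.
Proof.
exists (5%:R)^-1, 144%:R; split; first by rewrite invr_gt0 ltr0n.
split; first by rewrite ltr0n.
move=> R n p w hn hp hp2 hw hwc hN.
rewrite fmorphV /= ratr_nat in hwc; rewrite ratr_nat.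
have hp1 : p <= 1 by lra.
have hp0 : 0 <= p by apply: ltW.
have hn0 : (0 : R) <= n%:R by [].
have h10 : (10 * w <= n)%N.
  rewrite -(ler_nat R) natrM.
  have : 10%:R * w%:R <= 10%:R * ((5%:R)^-1 * n%:R * p) :> R by rewrite ler_wpM2l.
  move=> h; apply: le_trans h _.
  rewrite (_ : 10%:R * ((5%:R)^-1 * n%:R * p) = 2 * n%:R * p :> R); last first.
    by field.
  nra.
have hwn : (w < n)%N by lia.
rewrite lhs_eq.
set SA := \sum_(e : config n | Wsum e == w) weight p e * (Aof e)%:R.
set P1 := probW n p w.-1.
set N := probW n p w.
have S1 := stage1 hn hp0 hp1 hwn; rewrite -/SA -/P1 in S1.
have S2 := stage2 hn hp hp1 hw h10; rewrite -/P1 -/N in S2.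
have hP1 : 0 <= P1 by apply: sumr_ge0 => e _; apply: weight_ge0.
have hSA : 0 <= SA by apply: sumr_ge0 => e _; apply: mulr_ge0 => //; apply: weight_ge0.
have hwv : ((w.-1)%:R : R) <= w%:R by rewrite ler_nat leq_pred.
have hnp : 0 < n%:R * p by apply: mulr_gt0 => //; rewrite ltr0n; lia.
rewrite ler_pdivrMr //.
have -> : 144%:R / (n%:R * p) * w%:R ^+ 2 * N = (144%:R * w%:R ^+ 2 * N) / (n%:R * p) by ring.
rewrite ler_pdivlMr //.
have K1 : (1 - p) * SA * (p * n%:R) <= p * (w%:R * P1) * (p * n%:R).
  apply: ler_wpM2r; first by apply: mulr_ge0.
  apply: le_trans S1 _; apply: ler_wpM2l => //; apply: ler_wpM2r => //.
have K2 : p * (w%:R * P1) * (p * n%:R) = w%:R * (p ^+ 2 * n%:R * P1) by ring.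
have K3 : w%:R * (p ^+ 2 * n%:R * P1) <= w%:R * (36 * (w%:R * N)) by apply: ler_wpM2l.
have K4 : (1 - p) * SA * (p * n%:R) <= w%:R * (36 * (w%:R * N)).
  by apply: le_trans K1 _; rewrite K2.
have K5 : SA * (p * n%:R) <= 2 * ((1 - p) * SA * (p * n%:R)).
  rewrite -subr_ge0.
  have -> : 2 * ((1 - p) * SA * (p * n%:R)) - SA * (p * n%:R) = (1 - 2 * p) * (SA * (p * n%:R)) by ring.
  apply: mulr_ge0; first by lra.
  by apply: mulr_ge0 => //; rewrite mulrC ltW.
have -> : 144%:R * w%:R ^+ 2 * N = 2 * (2 * (w%:R * (36 * (w%:R * N)))) :> R by ring.
rewrite -mulrA [X in X <= _](_ : _ = 2 * (SA * (p * n%:R))); last by ring.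
rewrite ler_wpM2l //; apply: le_trans K5 _; rewrite ler_wpM2l //.
Qed.
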